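(* For every integer $n\ge 4$, $$\mathrm{wdim}_k(K_n\times K_n)=\begin{cases} n^2, & k\in\{2n+1,2n+2\};\\ n^2-1, & k=2n;\\ n^2-n, & k=2n-1 \text{ and } n\ge 5;\\ 13, & (n,k)=(4,7).\end{cases}$$
   Context: $K_n\times K_n$ is the direct product of two complete graphs on $n$ vertices: vertex set $[n]\times[n]$ with $[n]=\{1,\dots,n\}$, and $(i,j)$ adjacent to $(i',j')$ iff $i\ne i'$ and $j\ne j'$. For a connected graph $G$ with distance $d_G$, vertices $x,y,z$ and $S\subseteq V(G)$, let $\Delta_z(x,y)=|d_G(x,z)-d_G(y,z)|$ and $\Delta_S(x,y)=\sum_{z\in S}\Delta_z(x,y)$. A set $S$ is a weak $k$-resolving set if $\Delta_S(x,y)\ge k$ for all distinct $x,y\in V(G)$, and $\mathrm{wdim}_k(G)$ is the minimum cardinality of a weak $k$-resolving set of $G$. *)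

(* Defs.v *)
From mathcomp Require Import all_boot.
Set Implicit Arguments. Unset Strict Implicit. Unset Printing Implicit Defensive.

Section Graphs.
Variable T : finType.
Variable e : rel T.

Definition walk_len (x y : T) (m : nat) : bool :=
  [exists p : m.-tuple T, path e x p && (last x p == y)].

(* shortest-path distance: least length of a walk from x to y.
   Every shortest walk is a path, hence has length < #|T|; so in a connected
   graph this is the usual graph distance d_G(x,y). *)
Definition gdist (x y : T) : nat :=
  \big[minn/#|T|]_(m < #|T| | walk_len x y m) m.

Definition gconnected : Prop := forall x y : T, exists m, walk_len x y m.

Definition delta_z (z x y : T) : nat :=
  (gdist x z - gdist y z) + (gdist y z - gdist x z).

Definition delta_S (S : {set T}) (x y : T) : nat :=
  \sum_(z in S) delta_z z x y.

Definition weak_k_resolving (k : nat) (S : {set T}) : bool :=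
  [forall x, forall y, (x != y) ==> (k <= delta_S S x y)].

(* minimum cardinality of a weak k-resolving set
   (default #|T|.+1 if none exists) *)
Definition wdim (k : nat) : nat :=
  \big[minn/#|T|.+1]_(S : {set T} | weak_k_resolving k S) #|S|.
End Graphs.

(* direct product K_n x K_n on [n] x [n] (vertices indexed from 0) *)
Definition KnKn (n : nat) : rel ('I_n * 'I_n) :=
  fun u v => (u.1 != v.1) && (u.2 != v.2).
Arguments KnKn n : clear implicits.

(* Main.v *)
Require Import Defs.
From mathcomp Require Import all_boot.
From mathcomp Require Import zify.
Set Implicit Arguments. Unset Strict Implicit. Unset Printing Implicit Defensive.

Lemma bigmin_le (I : eqType) (r : seq I) (P : pred I) (F : I -> nat) N i :
  i \in r -> P i -> \big[minn/N]_(j <- r | P j) F j <= F i.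
Proof.
elim: r => [|a r IH] //=; rewrite big_cons inE => /orP[/eqP <-|ir] Pi.
  by rewrite Pi geq_minl.
case: (P a); last exact: IH.
by rewrite geq_min IH ?orbT.
Qed.

Lemma bigmin_eq (N m0 : nat) (P : pred nat) :
  m0 < N -> P m0 -> (forall m, m < m0 -> ~~ P m) ->
  \big[minn/N]_(m < N | P m) m = m0.
Proof.
move=> lt0 P0 Hm.
apply/eqP; rewrite eqn_leq; apply/andP; split.
- exact: (@bigmin_le _ _ _ _ _ (Ordinal lt0) (mem_index_enum _)).
- apply: (big_ind (fun v => m0 <= v)).
  + exact: ltnW.
  + by move=> u v hu hv; rewrite leq_min hu hv.
  + move=> i Pi; rewrite leqNgt; apply/negP => lt; by move: (Hm _ lt); rewrite Pi.
Qed.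

Lemma walk0 (T : finType) (e : rel T) x y : walk_len e x y 0 = (x == y).
Proof.
apply/existsP/eqP => [[t]|<-].
  by rewrite (tuple0 t) /= => /eqP.
by exists [tuple]; rewrite /= eqxx.
Qed.

Lemma walk1 (T : finType) (e : rel T) x y : walk_len e x y 1 = e x y.
Proof.
apply/existsP/idP => [[t]|exy].
  case: t => s; case: s => [|a [|b s]] //= _.
  by rewrite andbT => /andP[h /eqP <-].
by exists [tuple y]; rewrite /= exy eqxx.
Qed.

Lemma walk2 (T : finType) (e : rel T) x y w : e x w -> e w y -> walk_len e x y 2.
Proof.
move=> h1 h2; apply/existsP; exists [tuple w; y]; by rewrite /= h1 h2 eqxx.
Qed.

Lemma avoid2 n (a b : 'I_n) : 2 < n -> exists i : 'I_n, (i != a) && (i != b).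
Proof.
move=> n2.
have h0 : 0 < n by lia.
have h1 : 1 < n by lia.
case: (boolP ((Ordinal h0 != a) && (Ordinal h0 != b))) => [h|h]; first by exists (Ordinal h0).
case: (boolP ((Ordinal h1 != a) && (Ordinal h1 != b))) => [h'|h']; first by exists (Ordinal h1).
exists (Ordinal n2).
move: h h'; rewrite -!val_eqE /= => h h'.
lia.
Qed.

Definition dd n (x y : 'I_n * 'I_n) : nat :=
  if x == y then 0 else if KnKn n x y then 1 else 2.

Lemma card_T n : #|{: 'I_n * 'I_n}| = n * n.
Proof. by rewrite card_prod card_ord. Qed.

Lemma gdistE n (x y : 'I_n * 'I_n) : 2 < n -> gdist (KnKn n) x y = dd x y.
Proof.
move=> n2; rewrite /gdist /dd card_T.
have N2 : 2 < n * n by nia.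
case: (eqVneq x y) => [<-|nxy].
  apply: bigmin_eq => //; first by lia. by rewrite walk0 eqxx.
case: (boolP (KnKn n x y)) => hk.
  apply: bigmin_eq => //; first by lia.
  by rewrite walk1.
  by move=> m; case: m => // _; rewrite walk0.
apply: bigmin_eq => //.
- case: x y {nxy hk} => [a b] [a' b'].
  have [i /andP[i1 i2]] := avoid2 a a' n2.
  have [j /andP[j1 j2]] := avoid2 b b' n2.
  apply: (@walk2 _ _ _ _ (i, j)); rewrite /KnKn /=.
    by rewrite eq_sym i1 eq_sym j1.
  by rewrite i2 j2.
- move=> m; case: m => [_|[_|//]]; by rewrite ?walk0 ?walk1.
Qed.

Definition D n (z x y : 'I_n * 'I_n) : nat := (dd x z - dd y z) + (dd y z - dd x z).

Ltac neq H := let H' := fresh in have H' := H; rewrite eq_sym in H';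
  rewrite ?(negbTE H) ?(negbTE H').

Lemma D_row n (z x y : 'I_n * 'I_n) : x.1 = y.1 -> x != y ->
  D z x y = (z.2 == x.2) + (z.2 == y.2) + (z == x) + (z == y).
Proof.
case: x y z => [a b] [a' b'] [i j] /= e; subst a'.
rewrite /D /dd /KnKn /= !xpair_eqE eqxx /= => bb.
case: (eqVneq i a) => [_|ia]; case: (eqVneq j b) => [e|jb]; case: (eqVneq j b') => [e'|jb'];
 rewrite /= ?negbK; try (subst; by rewrite eqxx in bb); by [].
Qed.

Lemma D_col n (z x y : 'I_n * 'I_n) : x.2 = y.2 -> x != y ->
  D z x y = (z.1 == x.1) + (z.1 == y.1) + (z == x) + (z == y).
Proof.
case: x y z => [a b] [a' b'] [i j] /= e; subst b'.
rewrite /D /dd /KnKn /= !xpair_eqE eqxx /= andbT => bb.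
case: (eqVneq i a) => [e|ia]; case: (eqVneq j b) => [_|jb]; case: (eqVneq i a') => [e'|jb'];
 rewrite /= ?negbK ?andbT; try (subst; by rewrite eqxx in bb); by [].
Qed.

Lemma D_adj n (z x y : 'I_n * 'I_n) : x.1 != y.1 -> x.2 != y.2 ->
  D z x y + 2 * (z == (x.1, y.2)) + 2 * (z == (y.1, x.2)) + (z == x) + (z == y)
  = (z.1 == x.1) + (z.1 == y.1) + (z.2 == x.2) + (z.2 == y.2).
Proof.
case: x y z => [a b] [a' b'] [i j] /=.
rewrite /D /dd /KnKn /= !xpair_eqE => aa bb.
case: (eqVneq i a) => [e1|ia]; case: (eqVneq j b) => [e2|jb]; case: (eqVneq i a') => [e3|ia'];
 case: (eqVneq j b') => [e4|jb'];
 rewrite /= ?negbK ?andbT; try (subst; by rewrite eqxx in aa); try (subst; by rewrite eqxx in bb); by [].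
Qed.

Lemma D_adj_le1 n (z x y : 'I_n * 'I_n) : x.1 != y.1 -> x.2 != y.2 -> D z x y <= 1.
Proof.
case: x y z => [a b] [a' b'] [i j] /=.
rewrite /D /dd /KnKn /= !xpair_eqE => aa bb.
case: (eqVneq i a) => [e1|ia]; case: (eqVneq j b) => [e2|jb]; case: (eqVneq i a') => [e3|ia'];
 case: (eqVneq j b') => [e4|jb'];
 rewrite /= ?negbK ?andbT; try (subst; by rewrite eqxx in aa); try (subst; by rewrite eqxx in bb); by [].
Qed.

Lemma D_le2 n (z x y : 'I_n * 'I_n) : D z x y <= 2.
Proof. rewrite /D /dd; case: (x == z); case: (y == z); case: (KnKn n x z); by case: (KnKn n y z). Qed.

Definition DS n (S : {set 'I_n * 'I_n}) x y := \sum_(z in S) D z x y.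

Lemma deltaSE n (S : {set 'I_n * 'I_n}) x y : 2 < n ->
  delta_S (KnKn n) S x y = DS S x y.
Proof.
move=> n2; apply: eq_bigr => z _; by rewrite /delta_z !gdistE.
Qed.

Lemma wkrP n k (S : {set 'I_n * 'I_n}) : 2 < n ->
  weak_k_resolving (KnKn n) k S <-> forall x y, x != y -> k <= DS S x y.
Proof.
move=> n2; split.
  move=> /forallP H x y nxy; move/forallP: (H x) => /(_ y) /implyP /(_ nxy).
  by rewrite deltaSE.
move=> H; apply/forallP => x; apply/forallP => y; apply/implyP => nxy.
by rewrite deltaSE // H.
Qed.

Lemma sumT (T : finType) (F : T -> nat) : \sum_(z in [set: T]) F z = \sum_z F z.
Proof. by apply: eq_bigl => z; rewrite in_setT. Qed.

Lemma sum_eq1 (T : finType) (w : T) : \sum_(z : T) (z == w) = 1.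
Proof.
rewrite (bigD1 w) //= eqxx big1 // => z /negbTE -> //.
Qed.

Lemma sum_fst n (a : 'I_n) : \sum_(z : 'I_n * 'I_n) (z.1 == a) = n.
Proof.
rewrite -(pair_bigA _ (fun i j => nat_of_bool (i == a))) /= exchange_big /=.
under eq_bigr do rewrite sum_eq1.
by rewrite sum1_card card_ord.
Qed.

Lemma sum_snd n (b : 'I_n) : \sum_(z : 'I_n * 'I_n) (z.2 == b) = n.
Proof.
rewrite -(pair_bigA _ (fun i j => nat_of_bool (j == b))) /=.
under eq_bigr do rewrite sum_eq1.
by rewrite sum1_card card_ord.
Qed.

Lemma DS_row n (x y : 'I_n * 'I_n) : x.1 = y.1 -> x != y -> DS setT x y = 2 * n + 2.
Proof.
move=> e nxy; rewrite /DS sumT.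
under eq_bigr do rewrite D_row //.
by rewrite !big_split /= !sum_snd !sum_eq1; lia.
Qed.

Lemma DS_col n (x y : 'I_n * 'I_n) : x.2 = y.2 -> x != y -> DS setT x y = 2 * n + 2.
Proof.
move=> e nxy; rewrite /DS sumT.
under eq_bigr do rewrite D_col //.
by rewrite !big_split /= !sum_fst !sum_eq1; lia.
Qed.

Lemma DS_adj n (x y : 'I_n * 'I_n) : x.1 != y.1 -> x.2 != y.2 -> DS setT x y = 4 * n - 6.
Proof.
move=> h1 h2; rewrite /DS sumT.
have : \sum_(z : 'I_n * 'I_n) (D z x y + ((z == (x.1, y.2)) + (z == (x.1, y.2))) + ((z == (y.1, x.2)) + (z == (y.1, x.2))) + (z == x) + (z == y))
  = \sum_(z : 'I_n * 'I_n) ((z.1 == x.1) + (z.1 == y.1) + (z.2 == x.2) + (z.2 == y.2)).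
  by apply: eq_bigr => z _; have := D_adj z h1 h2; lia.
rewrite !big_split /= !sum_fst !sum_snd !sum_eq1; lia.
Qed.

Lemma sum_sub (T : finType) (A B : {pred T}) (F : T -> nat) :
  {subset A <= B} -> \sum_(z in A) F z <= \sum_(z in B) F z.
Proof.
move=> AB; rewrite [X in _ <= X]big_mkcond [X in X <= _]big_mkcond.
apply: leq_sum => z _; case: ifP => // /AB ->; by [].
Qed.

Lemma DS_split n (S : {set 'I_n * 'I_n}) x y : DS S x y + DS (~: S) x y = DS setT x y.
Proof.
rewrite /DS (bigID (fun z => z \in S) (fun z => z \in setT)) /=.
congr (_ + _); apply: eq_bigl => z; by rewrite ?in_setT ?in_setC.
Qed.

Lemma LOSS n (S : {set 'I_n * 'I_n}) x y (l : seq ('I_n * 'I_n)) :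
  uniq l -> (forall w, w \in l -> w \notin S) ->
  DS S x y + \sum_(w <- l) D w x y <= DS setT x y.
Proof.
move=> ul Hl; rewrite -(DS_split S) leq_add2l big_uniq // /DS.
apply: sum_sub => w; rewrite in_setC; exact: Hl.
Qed.

Lemma wdim_eq (T : finType) (e : rel T) k m :
  (exists S : {set T}, weak_k_resolving e k S /\ #|S| = m) ->
  (forall S : {set T}, weak_k_resolving e k S -> m <= #|S|) ->
  wdim e k = m.
Proof.
move=> [S0 [W0 C0]] H.
apply/eqP; rewrite eqn_leq; apply/andP; split.
  rewrite -C0; exact: (@bigmin_le _ _ _ (fun S : {set T} => #|S|) _ S0 (mem_index_enum _)).
apply: (big_ind (fun v => m <= v)).
- by rewrite -C0 ltnW // ltnS max_card.
- by move=> u v hu hv; rewrite leq_min hu hv.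
- by move=> S; apply: H.
Qed.

Lemma memtwo (T : eqType) (P : pred T) (z1 z2 : T) :
  P z1 -> P z2 -> forall w, w \in [:: z1; z2] -> P w.
Proof. by move=> h1 h2 w; rewrite !inE => /orP[/eqP->|/eqP->]. Qed.

Lemma SR n (S : {set 'I_n * 'I_n}) z1 z2 : z1 != z2 -> z1 \notin S -> z2 \notin S ->
  z1.1 = z2.1 -> DS S z1 z2 + 4 <= 2 * n + 2.
Proof.
move=> ne h1 h2 e.
have L := @LOSS n S z1 z2 [:: z1; z2].
have U : uniq [:: z1; z2] by rewrite /= inE ne.
move: (L U (@memtwo _ (fun w => w \notin S) z1 z2 h1 h2)); rewrite DS_row // !big_cons big_nil !D_row // !eqxx.
move: ne; rewrite eq_sym => ne. rewrite (negbTE ne). lia.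
Qed.

Lemma SC n (S : {set 'I_n * 'I_n}) z1 z2 : z1 != z2 -> z1 \notin S -> z2 \notin S ->
  z1.2 = z2.2 -> DS S z1 z2 + 4 <= 2 * n + 2.
Proof.
move=> ne h1 h2 e.
have L := @LOSS n S z1 z2 [:: z1; z2].
have U : uniq [:: z1; z2] by rewrite /= inE ne.
move: (L U (@memtwo _ (fun w => w \notin S) z1 z2 h1 h2)); rewrite DS_col // !big_cons big_nil !D_col // !eqxx.
move: ne; rewrite eq_sym => ne. rewrite (negbTE ne). lia.
Qed.

Lemma D_adj_r n (w x y : 'I_n * 'I_n) : x.1 != y.1 -> x.2 != y.2 ->
  (w.1 == x.1) || (w.1 == y.1) -> w.2 != x.2 -> w.2 != y.2 -> 1 <= D w x y.
Proof.
move=> h1 h2 h3 h4 h5; have := D_adj w h1 h2.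
case: w x y h1 h2 h3 h4 h5 => [i j] [a b] [a' b'] /= h1 h2 h3 h4 h5.
rewrite !xpair_eqE (negbTE h4) (negbTE h5) !andbF.
case/orP: h3 => /eqP e; subst; rewrite eqxx; lia.
Qed.

Lemma D_adj_c n (w x y : 'I_n * 'I_n) : x.1 != y.1 -> x.2 != y.2 ->
  (w.2 == x.2) || (w.2 == y.2) -> w.1 != x.1 -> w.1 != y.1 -> 1 <= D w x y.
Proof.
move=> h1 h2 h3 h4 h5; have := D_adj w h1 h2.
case: w x y h1 h2 h3 h4 h5 => [i j] [a b] [a' b'] /= h1 h2 h3 h4 h5.
rewrite !xpair_eqE (negbTE h4) (negbTE h5) !andFb.
case/orP: h3 => /eqP e; subst; rewrite eqxx; lia.
Qed.

Lemma pigeon n (A : {set 'I_n * 'I_n}) : n < #|A| ->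
  exists z1 z2, [/\ z1 \in A, z2 \in A, z1 != z2 & z1.1 = z2.1].
Proof.
move=> big.
case: (boolP [exists z1, exists z2, [&& z1 \in A, z2 \in A, z1 != z2 & z1.1 == z2.1]]).
  move=> /existsP[z1 /existsP[z2 /and4P[a b c /eqP d]]]; by exists z1, z2.
move=> nH; exfalso.
have inj : {in A &, injective (fun z : 'I_n * 'I_n => z.1)}.
  move=> z1 z2 h1 h2 e; apply/eqP; apply: contraNT nH => ne.
  apply/existsP; exists z1; apply/existsP; exists z2; by rewrite h1 h2 ne e eqxx.
move: (max_card [set z.1 | z in A]); rewrite (card_in_imset inj) card_ord; lia.
Qed.

Definition Cd n : {set 'I_n * 'I_n} := [set (i, i) | i : 'I_n].

Lemma diag_inj n : {in predT &, injective (fun i : 'I_n => (i, i))}.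
Proof. by move=> i j _ _ [->]. Qed.

Lemma card_Cd n : #|Cd n| = n.
Proof. by rewrite /Cd (card_in_imset (@diag_inj n)) card_ord. Qed.

Lemma DS_Cd n x y : DS (Cd n) x y = \sum_(i : 'I_n) D (i, i) x y.
Proof. by rewrite /DS /Cd (big_imset _ (@diag_inj n)). Qed.

Lemma DS_Cd_row n (x y : 'I_n * 'I_n) : x.1 = y.1 -> x != y -> DS (Cd n) x y <= 3.
Proof.
move=> e ne; rewrite DS_Cd.
have -> : 3 = \sum_(i : 'I_n) ((i == x.2) + (i == y.2) + (i == x.1)).
  by rewrite !big_split /= !sum_eq1.
apply: leq_sum => i _; rewrite D_row // -addnA leq_add2l.
case: x y e ne => [a b] [a' b'] /= e; subst a'; rewrite !xpair_eqE eqxx /= => bb.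
case: (eqVneq i a) => [_|ia]; last by rewrite !andFb.
case: (eqVneq i b) => [ib|ib]; last by case: (i == b'); rewrite ?andbF.
subst; rewrite (negbTE bb); by [].
Qed.

Lemma DS_Cd_col n (x y : 'I_n * 'I_n) : x.2 = y.2 -> x != y -> DS (Cd n) x y <= 3.
Proof.
move=> e ne; rewrite DS_Cd.
have -> : 3 = \sum_(i : 'I_n) ((i == x.1) + (i == y.1) + (i == x.2)).
  by rewrite !big_split /= !sum_eq1.
apply: leq_sum => i _; rewrite D_col // -addnA leq_add2l.
case: x y e ne => [a b] [a' b'] /= e; subst b'; rewrite !xpair_eqE eqxx /= !andbT => bb.
case: (eqVneq i b) => [_|ib]; last by rewrite !andbF.
case: (eqVneq i a) => [ia|ia]; last by case: (i == a'); rewrite ?andbF.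
subst; rewrite (negbTE bb); by [].
Qed.

Lemma DS_Cd_adj n (x y : 'I_n * 'I_n) : x.1 != y.1 -> x.2 != y.2 -> DS (Cd n) x y <= 4.
Proof.
move=> h1 h2; rewrite DS_Cd.
have -> : 4 = \sum_(i : 'I_n) ((i == x.1) + (i == y.1) + (i == x.2) + (i == y.2)).
  by rewrite !big_split /= !sum_eq1.
apply: leq_sum => i _; have := D_adj (i, i) h1 h2; rewrite /=; lia.
Qed.

Lemma DS_compl n (C : {set 'I_n * 'I_n}) x y : DS (~: C) x y + DS C x y = DS setT x y.
Proof. by rewrite -(DS_split (~: C)) setCK. Qed.

Lemma ar (a b c d k : nat) : b <= d -> a + b = c -> k + d <= c -> k <= a.
Proof. lia. Qed.

Lemma part1 n k : 4 <= n -> (k = 2*n+1 \/ k = 2*n+2) -> wdim (KnKn n) k = n ^ 2.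
Proof.
move=> n4 hk; have n2 : 2 < n by lia.
apply: wdim_eq.
  exists setT; split; last by rewrite cardsT card_T; lia.
  apply/(@wkrP n k setT n2) => x y ne.
  case: (eqVneq x.1 y.1) => [e1|n1]; first by rewrite DS_row //; lia.
  case: (eqVneq x.2 y.2) => [e2|n2']; first by rewrite DS_col //; lia.
  rewrite DS_adj //; lia.
move=> S WS; have W := proj1 (@wkrP n k S n2) WS.
rewrite leqNgt; apply/negP => lt.
have : 0 < #|~: S| by have := cardsC S; rewrite card_T; lia.
case/card_gt0P => z; rewrite in_setC => zS.
have [b2 /andP[hb _]] := avoid2 z.2 z.2 n2.
pose y := (z.1, b2).
have ne : z != y by apply/eqP => E; move: hb; rewrite E /= eqxx.
have L := @LOSS n S z y [:: z] erefl.
have {}L : DS S z y + \sum_(w <- [:: z]) D w z y <= DS [set: 'I_n * 'I_n] z y.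
  by apply: L => w; rewrite inE => /eqP->.
rewrite big_cons big_nil D_row // DS_row // !eqxx in L.
have := W z y ne; lia.
Qed.

Lemma part2 n : 4 <= n -> wdim (KnKn n) (2 * n) = n ^ 2 - 1.
Proof.
move=> n4; have n2 : 2 < n by lia.
have n0 : 0 < n by lia.
pose z0 := (Ordinal n0, Ordinal n0).
apply: wdim_eq.
  exists [set~ z0]; split; last by rewrite cardsC1 card_T; lia.
  apply/(@wkrP n _ _ n2) => x y ne.
  have B := DS_compl [set z0] x y; rewrite {2}/DS big_set1 in B.
  apply: (ar (D_le2 z0 x y) B).
  case: (eqVneq x.1 y.1) => [e1|n1]; first by rewrite DS_row //; lia.
  case: (eqVneq x.2 y.2) => [e2|n2']; first by rewrite DS_col //; lia.
  rewrite DS_adj //; lia.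
move=> S WS; have W := proj1 (@wkrP n _ S n2) WS.
rewrite leqNgt; apply/negP => lt.
have : 1 < #|~: S| by have := cardsC S; rewrite card_T; lia.
case/card_gt1P => z1 [z2 []]; rewrite !in_setC => h1 h2 ne.
case: (eqVneq z1.2 z2.2) => [e|ne2].
  have := SC ne h1 h2 e; have := W z1 z2 ne; lia.
pose y := (z1.1, z2.2).
have ney : z1 != y by apply/eqP => E; move: ne2; rewrite E /= eqxx.
have U : uniq [:: z1; z2] by rewrite /= inE ne.
have L := @LOSS n S z1 y [:: z1; z2] U (@memtwo _ (fun w => w \notin S) z1 z2 h1 h2).
rewrite !big_cons big_nil !D_row // DS_row // !eqxx in L.
have := W z1 y ney; lia.
Qed.

Lemma part3 n : 5 <= n -> wdim (KnKn n) (2 * n - 1) = n ^ 2 - n.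
Proof.
move=> n5; have n2 : 2 < n by lia.
apply: wdim_eq.
  exists (~: Cd n); split; last by rewrite cardsCs setCK card_T card_Cd; lia.
  apply/(@wkrP n _ _ n2) => x y ne.
  have B := DS_compl (Cd n) x y.
  case: (eqVneq x.1 y.1) => [e1|n1].
    by apply: (ar (DS_Cd_row e1 ne) B); rewrite DS_row //; lia.
  case: (eqVneq x.2 y.2) => [e2|n2'].
    by apply: (ar (DS_Cd_col e2 ne) B); rewrite DS_col //; lia.
  by apply: (ar (DS_Cd_adj n1 n2') B); rewrite DS_adj //; lia.
move=> S WS; have W := proj1 (@wkrP n _ S n2) WS.
rewrite leqNgt; apply/negP => lt.
have : n < #|~: S| by have := cardsC S; rewrite card_T; lia.
case/pigeon => z1 [z2 []]; rewrite !in_setC => h1 h2 ne e.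
have := SR ne h1 h2 e; have := W z1 z2 ne; lia.
Qed.

Lemma ar2 (a b c d f : nat) : a + (b + (c + (d + (f + 0)))) <= 10 ->
  0 < b -> 0 < c -> 0 < d -> 0 < f -> 6 < a -> False.
Proof. lia. Qed.

Lemma part4 : wdim (KnKn 4) 7 = 13.
Proof.
have n2 : 2 < 4 by [].
pose z0 : 'I_4 * 'I_4 := (ord0, ord0).
pose C3 := Cd 4 :\ z0.
have z0C : z0 \in Cd 4 by apply/imsetP; exists ord0.
have cC3 : #|C3| = 3.
  by move: (cardsD1 z0 (Cd 4)); rewrite z0C card_Cd /C3 add1n => -[].
have sub : {subset C3 <= Cd 4} by move=> w; rewrite in_setD1 => /andP[].
apply: wdim_eq.
  exists (~: C3); split; last by rewrite cardsCs setCK card_T cC3.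
  apply/(@wkrP 4 _ _ n2) => x y ne.
  have B := DS_compl C3 x y.
  case: (eqVneq x.1 y.1) => [e1|n1].
    have le : DS C3 x y <= 3 by apply: leq_trans (DS_Cd_row e1 ne); exact: sum_sub.
    by apply: (ar le B); rewrite DS_row.
  case: (eqVneq x.2 y.2) => [e2|n2'].
    have le : DS C3 x y <= 3 by apply: leq_trans (DS_Cd_col e2 ne); exact: sum_sub.
    by apply: (ar le B); rewrite DS_col.
  have le : DS C3 x y <= 3.
    apply: (@leq_trans (\sum_(z in C3) 1)); last by rewrite sum1_card cC3.
    apply: leq_sum => z _; exact: D_adj_le1.
  by apply: (ar le B); rewrite DS_adj.
move=> S WS; have W := proj1 (@wkrP 4 _ S n2) WS.
rewrite leqNgt; apply/negP => lt.
have cS : 3 < #|~: S| by rewrite cardsCs setCK card_T; lia.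
have noRow : forall u v, u \notin S -> v \notin S -> u != v -> u.1 != v.1.
  move=> u v hu hv ne; apply/eqP => e; have := SR ne hu hv e; have := W u v ne; lia.
have noCol : forall u v, u \notin S -> v \notin S -> u != v -> u.2 != v.2.
  move=> u v hu hv ne; apply/eqP => e; have := SC ne hu hv e; have := W u v ne; lia.
pose l := take 4 (enum (~: S)).
have sz : size l = 4 by rewrite size_takel // -cardE.
have ul : uniq l by rewrite take_uniq // enum_uniq.
have ml : forall w, w \in l -> w \notin S.
  by move=> w /mem_take; rewrite mem_enum in_setC.
move: l sz ul ml; case=> [|z1 [|z2 [|z3 [|z4 [|z5 r]]]]] //= _.
rewrite !inE !negb_or => /and4P[/and3P[n12 n13 n14] /andP[n23 n24] n34 _] ml.
have h1 := ml z1; have h2 := ml z2; have h3 := ml z3; have h4 := ml z4.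
rewrite !inE !eqxx ?orbT in h1 h2 h3 h4.
have {h1 h2 h3 h4} [h1 h2 h3 h4] : [/\ z1 \notin S, z2 \notin S, z3 \notin S & z4 \notin S].
  by split; [apply: h1|apply: h2|apply: h3|apply: h4].
pose x := (z1.1, z3.2); pose y := (z2.1, z4.2).
have e1 : x.1 != y.1 by exact: (noRow _ _ h1 h2 n12).
have e2 : x.2 != y.2 by exact: (noCol _ _ h3 h4 n34).
have nxy : x != y by apply: contraNneq e1 => ->.
have U : uniq [:: z1; z2; z3; z4] by rewrite /= !inE !negb_or n12 n13 n14 n23 n24 n34.
have M : forall w, w \in [:: z1; z2; z3; z4] -> w \notin S.
  by move=> w; rewrite !inE => /or4P[] /eqP->.
have L := @LOSS 4 S x y [:: z1; z2; z3; z4] U M.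
rewrite !big_cons big_nil DS_adj // in L.
have d1 : 1 <= D z1 x y.
  apply: (@D_adj_r 4 z1 x y e1 e2).
  - by rewrite /= eqxx.
  - exact: (noCol _ _ h1 h3 n13).
  - exact: (noCol _ _ h1 h4 n14).
have d2 : 1 <= D z2 x y.
  apply: (@D_adj_r 4 z2 x y e1 e2).
  - by rewrite /= eqxx orbT.
  - exact: (noCol _ _ h2 h3 n23).
  - exact: (noCol _ _ h2 h4 n24).
have d3 : 1 <= D z3 x y.
  apply: (@D_adj_c 4 z3 x y e1 e2).
  - by rewrite /= eqxx.
  - by apply: (noRow _ _ h3 h1); rewrite eq_sym.
  - by apply: (noRow _ _ h3 h2); rewrite eq_sym.
have d4 : 1 <= D z4 x y.
  apply: (@D_adj_c 4 z4 x y e1 e2).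
  - by rewrite /= eqxx orbT.
  - by apply: (noRow _ _ h4 h1); rewrite eq_sym.
  - by apply: (noRow _ _ h4 h2); rewrite eq_sym.
exact: (ar2 L d1 d2 d3 d4 (W x y nxy)).
Qed.

Unset Implicit Arguments.

Theorem mainTheorem6 (n : nat) : 4 <= n ->
  (forall k, (k = 2 * n + 1 \/ k = 2 * n + 2) -> wdim (KnKn n) k = n ^ 2) /\
  wdim (KnKn n) (2 * n) = n ^ 2 - 1 /\
  (5 <= n -> wdim (KnKn n) (2 * n - 1) = n ^ 2 - n) /\
  (n = 4 -> wdim (KnKn n) 7 = 13).
Proof.
move=> n4; split; first by move=> k hk; exact: part1.
split; first exact: part2.
split; first exact: part3.
by move=> ->; exact: part4.
Qed.
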